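(* A risk-sharing rule $\boldsymbol{C}$ on $\chi^n$ is the uniform RS rule if and only if it satisfies the reshuffling property and has strongly aggregate contributions.
   Context: Fix a probability space $(\Omega,\mathcal{F},\mathbb{P})$ and an integer $n\ge 1$. Let $\chi$ be a convex cone of non-negative random variables on this space (closed under addition and under multiplication by positive scalars) with $0\in\chi$. All equalities between random variables are understood almost surely. A pool is a vector $\boldsymbol{X}=(X_1,\ldots,X_n)\in\chi^n$, with aggregate loss $S_{\boldsymbol{X}}=\sum_{i=1}^n X_i$. A risk-sharing (RS) rule is a mapping $\boldsymbol{C}$ assigning to every pool $\boldsymbol{X}\in\chi^n$ a vector $\boldsymbol{C}[\boldsymbol{X}]=(C_1[\boldsymbol{X}],\ldots,C_n[\boldsymbol{X}])$ of real-valued random variables satisfying $\sum_{i=1}^n C_i[\boldsymbol{X}]=S_{\boldsymbol{X}}$. The uniform RS rule is given by $C_i[\boldsymbol{X}]=S_{\boldsymbol{X}}/n$ for all $i$ and all pools. For a permutation $\pi$ of $\{1,\ldots,n\}$, $\boldsymbol{X}^\pi=(X_{\pi(1)},\ldots,X_{\pi(n)})$. Reshuffling property: $C_i[\boldsymbol{X}^\pi]=C_{\pi(i)}[\boldsymbol{X}]$ for all pools $\boldsymbol{X}$, permutations $\pi$ and indices $i$. Strongly aggregate contributions: there exists a single function $\mathbf{h}=(h_1,\ldots,h_n):\mathbb{R}\to\mathbb{R}^n$ (the same for all pools) such that $C_i[\boldsymbol{X}]=h_i(S_{\boldsymbol{X}})$ for every pool $\boldsymbol{X}\in\chi^n$ and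 every $i$. *)

(* Defs.v *)
From HB Require Import structures.
From mathcomp Require Import all_boot all_order all_algebra all_fingroup.
From mathcomp Require Import all_classical all_reals all_analysis.
Set Implicit Arguments. Unset Strict Implicit. Unset Printing Implicit Defensive.
Import Order.TTheory GRing.Theory Num.Theory.
Local Open Scope ring_scope.
Local Open Scope classical_set_scope.

Section RiskSharing.
Context {d : measure_display} {T : measurableType d} {R : realType}.
Variable (P : probability T R).

Definition as_eq (X Y : T -> R) : Prop := {ae P, forall w, X w = Y w}.

Definition rv_cone (chi : set (T -> R)) : Prop :=
  [/\ (forall X, chi X -> measurable_fun setT X /\ (forall w, 0 <= X w)),
      chi (fun _ => 0),
      (forall X Y, chi X -> chi Y -> chi (X \+ Y)) &
      (forall (a : R) X, 0 < a -> chi X -> chi (fun w => a * X w))].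

Variable n : nat.

Definition is_pool (chi : set (T -> R)) (X : 'I_n -> T -> R) : Prop :=
  forall i, chi (X i).

Definition aggregate (X : 'I_n -> T -> R) : T -> R :=
  fun w => \sum_(i < n) X i w.

Definition RS_rule (chi : set (T -> R))
    (C : ('I_n -> T -> R) -> 'I_n -> T -> R) : Prop :=
  forall X, is_pool chi X ->
    (forall i, measurable_fun setT (C X i)) /\
    as_eq (fun w => \sum_(i < n) C X i w) (aggregate X).

Definition uniform_rule (chi : set (T -> R))
    (C : ('I_n -> T -> R) -> 'I_n -> T -> R) : Prop :=
  forall X, is_pool chi X -> forall i,
    as_eq (C X i) (fun w => aggregate X w / n%:R).

Definition reshuffle (X : 'I_n -> T -> R) (pi : {perm 'I_n}) : 'I_n -> T -> R :=
  fun i => X (pi i).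

Definition reshuffling (chi : set (T -> R))
    (C : ('I_n -> T -> R) -> 'I_n -> T -> R) : Prop :=
  forall X, is_pool chi X -> forall (pi : {perm 'I_n}) i,
    as_eq (C (reshuffle X pi) i) (C X (pi i)).

Definition strongly_aggregate (chi : set (T -> R))
    (C : ('I_n -> T -> R) -> 'I_n -> T -> R) : Prop :=
  exists h : 'I_n -> R -> R,
    forall X, is_pool chi X -> forall i,
      as_eq (C X i) (fun w => h i (aggregate X w)).

End RiskSharing.

(* Main.v *)
Require Import Defs.
From HB Require Import structures.
From mathcomp Require Import all_boot all_order all_algebra all_fingroup.
From mathcomp Require Import all_classical all_reals all_analysis.
Import Order.TTheory GRing.Theory Num.Theory.
Local Open Scope ring_scope.

Lemma agg_reshuffle (T : Type) (R : realType) (n : nat) (X : 'I_n -> T -> R)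
  (pi : {perm 'I_n}) w :
  \sum_(i < n) X (pi i) w = \sum_(i < n) X i w.
Proof. by rewrite [RHS](reindex_inj (@perm_inj _ pi)). Qed.

Theorem theorem2 (d : measure_display) (T : measurableType d) (R : realType)
    (P : probability T R) (n : nat) (n_ge1 : (0 < n)%N)
    (chi : set (T -> R)) (chi_cone : rv_cone chi)
    (C : ('I_n -> T -> R) -> 'I_n -> T -> R) (C_RS : RS_rule P chi C) :
  uniform_rule P chi C <-> (reshuffling P chi C /\ strongly_aggregate P chi C).
Proof.
split.
- move=> U; split.
  + move=> X HX pi i.
    have HXp : is_pool chi (reshuffle X pi) by move=> j; exact: HX.
    move: (U _ HXp i) (U _ HX (pi i)); apply: filterS2 => w -> ->.
    by rewrite /aggregate /reshuffle agg_reshuffle.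
  + exists (fun _ s => s / n%:R) => X HX i; exact: U.
- move=> [Rs [h Hh]] X HX i.
  have HXp : forall j, is_pool chi (reshuffle X (tperm i j)).
    by move=> j k; exact: HX.
  have A := filter_forall (ae_filter_ringOfSetsType P) (fun j => Hh X HX j).
  have B := filter_forall (ae_filter_ringOfSetsType P) (fun j => Rs X HX (tperm i j) i).
  have D := filter_forall (ae_filter_ringOfSetsType P) (fun j => Hh _ (HXp j) i).
  have E := (C_RS X HX).2.
  have AB := @filterS2 _ _ (ae_filter_ringOfSetsType P) _ _ _ (fun w a b => conj a b) A B.
  have DE := @filterS2 _ _ (ae_filter_ringOfSetsType P) _ _ _ (fun w a b => conj a b) D E.
  move: AB DE; apply: filterS2 => w [HA HB] [HD HE].
  have Hj : forall j, C X j w = h i (aggregate X w).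
    move=> j; have := HB j; rewrite tpermL HD => <-.
    by rewrite /aggregate /reshuffle agg_reshuffle.
  move: HE; under eq_bigr do rewrite Hj.
  rewrite sumr_const card_ord Hj.
  set s := aggregate X w; set t := h i s => <-.
  rewrite -[t *+ n]mulr_natr mulfK // pnatr_eq0 -lt0n //.
Qed.
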